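(* Let $N\ge2$, $\mu>0$, $2<p<2+\frac4N$, $c>0$, $u\in S(c)$, and $k_0=\frac{p\gamma_pN}{2(2-p\gamma_p)}c^2$. If $P(u)\le0$ and $\|\nabla u\|_2^2=k_0$, then $$c\ge D=\left(\frac{1}{\mu\gamma_pC(N,p)^p}\Big(\frac{N}{2-p\gamma_p}\Big)^{\frac{2-p\gamma_p}{2}}\Big(\frac{p\gamma_p}{2}\Big)^{-\frac{p\gamma_p}{2}}\right)^{\frac1{p-2}}.$$ Moreover, if $P(u)<0$ and $\|\nabla u\|_2^2=k_0$, then $c>D$.
   Context: Case $\alpha=-1$. $\gamma_p=\frac{N(p-2)}{2p}$, $C(N,p)$ the best constant in $\|u\|_p\le C(N,p)\|\nabla u\|_2^{\gamma_p}\|u\|_2^{1-\gamma_p}$. $W=\{u\in H^1(\mathbb{R}^N):\int u^2|\log u^2|<\infty\}$, $S(c)=\{u\in W:\|u\|_2=c\}$, $P(u)=\|\nabla u\|_2^2+\frac N2c^2-\mu\gamma_p\|u\|_p^p$. *)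

(* Defs.v *)
(* Functions on R^N are functions 'rV[R]_N -> R. *)
From HB Require Import structures.
From mathcomp Require Import all_boot all_order all_algebra.
From mathcomp Require Import all_classical all_reals all_analysis.
Set Implicit Arguments. Unset Strict Implicit. Unset Printing Implicit Defensive.
Import Order.TTheory GRing.Theory Num.Theory.
Import numFieldNormedType.Exports.
Local Open Scope classical_set_scope.
Local Open Scope ring_scope.

Section Sobolev.
Variables (R : realType) (N : nat).
Local Notation V := 'rV[R]_N.

Definition borelN (f : V -> R) : Prop :=
  forall B : set R, measurable B -> <<s [set A : set V | open A] >> (f @^-1` B).

Definition updc (x : V) (m : nat) (t : R) : V :=
  \row_(j < N) (if (j : nat) == m then t else x 0 j).

(* Lebesgue integral on R^N, as the iterated integral over the coordinates
   (Tonelli/Fubini) with respect to the Lebesgue measure on R. *)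
Fixpoint iter_int (k : nat) (f : V -> \bar R) (x : V) : \bar R :=
  match k with
  | 0 => f x
  | m.+1 => (\int[lebesgue_measure]_(t in [set: R]) iter_int m f (updc x m t))%E
  end.

Definition intRN (f : V -> \bar R) : \bar R := iter_int N f 0.

Definition L2 (u : V -> R) : Prop :=
  borelN u /\ (intRN (fun x => ((u x) ^+ 2)%:E) < +oo)%E.

Definition norm2 (u : V -> R) : R := Num.sqrt (fine (intRN (fun x => ((u x) ^+ 2)%:E))).
Definition normp_pow (u : V -> R) (p : R) : R := fine (intRN (fun x => (`|u x| `^ p)%:E)).
Definition normp (u : V -> R) (p : R) : R := normp_pow u p `^ p^-1.

Definition dpart (i : 'I_N) (f : V -> R) : V -> R := 'D_(delta_mx 0 i) f.
Definition iterd (s : seq 'I_N) (f : V -> R) : V -> R := foldr dpart f s.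
Definition smooth (f : V -> R) : Prop :=
  forall s : seq 'I_N, continuous (iterd s f) /\
    forall (i : 'I_N) (x : V), derivable (iterd s f) x (delta_mx 0 i).
Definition compact_support (f : V -> R) : Prop :=
  exists M : R, forall x : V, M < `|x| -> f x = 0.
Definition test_fun (f : V -> R) : Prop := smooth f /\ compact_support f.

Definition weak_grad (u : V -> R) (g : 'I_N -> V -> R) : Prop :=
  forall (i : 'I_N) (phi : V -> R), test_fun phi ->
    intRN (fun x => (u x * dpart i phi x)%:E) =
    (- intRN (fun x => (g i x * phi x)%:E))%E.

Definition H1 (u : V -> R) (g : 'I_N -> V -> R) : Prop :=
  L2 u /\ (forall i, L2 (g i)) /\ weak_grad u g.

Definition grad_norm2sq (g : 'I_N -> V -> R) : R := \sum_(i < N) (norm2 (g i)) ^+ 2.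

Definition inW (u : V -> R) (g : 'I_N -> V -> R) : Prop :=
  H1 u g /\ (intRN (fun x => ((u x) ^+ 2 * `|ln ((u x) ^+ 2)|)%:E) < +oo)%E.
Definition inS (c : R) (u : V -> R) (g : 'I_N -> V -> R) : Prop :=
  inW u g /\ norm2 u = c.

Definition gamma_p (p : R) : R := (N%:R * (p - 2)) / (2 * p).

Definition GN_ineq (p C : R) : Prop :=
  forall u g, H1 u g ->
    normp u p <= C * (Num.sqrt (grad_norm2sq g)) `^ (gamma_p p)
                   * (norm2 u) `^ (1 - gamma_p p).

Definition GN_const (p : R) : R := inf [set C : R | 0 <= C /\ GN_ineq p C].

(* the Pohozaev-type functional P(u) (with ||u||_2 = c) *)
Definition Pohozaev (mu p c : R) (u : V -> R) (g : 'I_N -> V -> R) : R :=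
  grad_norm2sq g + N%:R / 2 * c ^+ 2 - mu * gamma_p p * normp_pow u p.

End Sobolev.

(* Main.v *)
Require Import Defs.
From HB Require Import structures.
From mathcomp Require Import all_boot all_order all_algebra.
From mathcomp Require Import all_classical all_reals all_analysis.
From mathcomp Require Import ring lra.
Import Order.TTheory GRing.Theory Num.Theory.
Local Open Scope ring_scope.

Theorem lemma7p3 (R : realType) (N : nat) (mu p c : R)
  (u : 'rV[R]_N -> R) (g : 'I_N -> 'rV[R]_N -> R) :
  (2 <= N)%N -> 0 < mu -> 2 < p -> p < 2 + 4 / N%:R -> 0 < c ->
  inS c u g ->
  let gp := gamma_p N p in
  let k0 := (p * gp * N%:R) / (2 * (2 - p * gp)) * c ^+ 2 in
  let D := ((mu * gp * GN_const N p `^ p)^-1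
             * (N%:R / (2 - p * gp)) `^ ((2 - p * gp) / 2)
             * (p * gp / 2) `^ (- (p * gp / 2))) `^ (p - 2)^-1 in
  (Pohozaev mu p c u g <= 0 -> grad_norm2sq g = k0 -> D <= c) /\
  (Pohozaev mu p c u g < 0 -> grad_norm2sq g = k0 -> D < c).
Proof.
move=> HN Hmu Hp2 HpN Hc HS gp k0 D.
have Nr : 0 < N%:R :> R by rewrite ltr0n; apply: leq_trans HN.
have p0 : 0 < p by lra.
have p2' : 0 < p - 2 by lra.
have pgE : p * gp = N%:R * (p - 2) / 2.
  rewrite /gp /gamma_p; field; lra.
have hN4 : N%:R * (4 / N%:R) = 4 :> R by field; lra.
have pgpos : 0 < p * gp.
  rewrite pgE; apply: divr_gt0 => //; apply: mulr_gt0 => //; lra.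
have gpos : 0 < gp by rewrite -(pmulr_rgt0 _ p0).
have h2 : 0 < 2 - p * gp.
  rewrite pgE.
  have : 0 < N%:R * (2 + 4 / N%:R - p) by apply: mulr_gt0 => //; lra.
  rewrite mulrDr mulrBr mulrDr hN4 => H; lra.
have gpE : gamma_p N p = gp by [].
clearbody gp.
set a := p * gp / 2.
set b := N%:R / (2 - p * gp).
have apos : 0 < a by rewrite /a; lra.
have bpos : 0 < b by apply: divr_gt0.
have k0E : k0 = a * b * c ^+ 2.
  rewrite /k0 /a /b; field; lra.
have NE : N%:R / 2 = b * (1 - a).
  rewrite /a /b; field; lra.
have aE : a = p * gp / 2 by [].
have DE : D = ((mu * gp * GN_const N p `^ p)^-1 * b `^ ((2 - p * gp) / 2)
   * a `^ (- a)) `^ (p - 2)^-1 by [].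
clearbody a b D k0.
case: HS => [[HH1 _] Hn2].
pose S := [set C : R | 0 <= C /\ GN_ineq N p C]%classic.
have CE : GN_const N p = inf S by [].
have [[C0 HC0]|Se] := pselect (exists C, S C); last first.
  have S0 : S = set0.
    rewrite predeqE => x; split => [Hx|[]]; exfalso; apply: Se; by exists x.
  have D0 : D = 0.
    rewrite DE CE S0 inf0 powR0; last by rewrite gt_eqF.
    rewrite mulr0 invr0 !mul0r powR0; first by [].
    by rewrite invr_eq0 gt_eqF.
  by rewrite D0; split => _ _; [apply: ltW|].
pose G := grad_norm2sq g. have GE : G = grad_norm2sq g by [].
pose Q := normp_pow u p. have QE : Q = normp_pow u p by [].
pose C := inf S. have CdE : C = inf S by [].
pose s := Num.sqrt G. have sE : s = Num.sqrt G by [].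
pose X := s `^ gp * norm2 u `^ (1 - gp). have XE : X = s `^ gp * norm2 u `^ (1 - gp) by [].
pose K := (mu * gp * C `^ p)^-1 * b `^ ((2 - p * gp) / 2) * a `^ (- a).
have KE : K = (mu * gp * C `^ p)^-1 * b `^ ((2 - p * gp) / 2) * a `^ (- a) by [].
clearbody G Q C s X K.
have mg : 0 < mu * gp by apply: mulr_gt0.
have key : forall strict : bool,
   (if strict then Pohozaev mu p c u g < 0 else Pohozaev mu p c u g <= 0) ->
   grad_norm2sq g = k0 -> (if strict then D < c else D <= c).
  move=> strict HP HG; rewrite -GE in HG.
  have HP' : b * c ^+ 2 <= mu * gp * Q /\
    (strict -> b * c ^+ 2 < mu * gp * Q).
    move: HP; rewrite /Pohozaev gpE -GE -QE HG k0E.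
    have -> : b * c ^+ 2 = a * b * c ^+ 2 + N%:R / 2 * c ^+ 2.
      rewrite NE; ring.
    case: strict => H; split => [|hh]; [lra | lra | lra | by []].
  have c2pos : 0 < c ^+ 2 by apply: exprn_gt0.
  have Qpos : 0 < Q.
    have : 0 < mu * gp * Q.
      case: HP' => H _; apply: lt_le_trans H; exact: mulr_gt0.
    by rewrite (pmulr_rgt0 _ mg).
  have abpos : 0 < a * b by apply: mulr_gt0.
  have Gpos : 0 < G by rewrite HG k0E; apply: mulr_gt0.
  have spos : 0 < s by rewrite sE sqrtr_gt0.
  have cgp : 0 < norm2 u `^ (1 - gp) by apply: powR_gt0; rewrite Hn2.
  have sgp : 0 < s `^ gp by apply: powR_gt0.
  have Xpos : 0 < X by rewrite XE; apply: mulr_gt0.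
  have npos : 0 < normp u p by rewrite /normp -QE; apply: powR_gt0.
  have GNC : normp u p <= C * X.
    rewrite -ler_pdivrMr // CdE; apply: lb_le_inf; first by exists C0.
    move=> y [y0 Hy]; rewrite ler_pdivrMr //.
    move: (Hy u g HH1); rewrite gpE -GE -sE -mulrA -XE => H; exact: H.
  have Cpos : 0 < C by rewrite -(pmulr_lgt0 _ Xpos); exact: lt_le_trans GNC.
  have E1 : p^-1 * ln Q <= ln C + gp * ln s + (1 - gp) * ln c.
    have CX : 0 < C * X by apply: mulr_gt0.
    have : ln (normp u p) <= ln (C * X) by rewrite ler_ln ?posrE.
    rewrite /normp ln_powR -QE XE mulrA (lnM (x := C * _)) ?posrE; last 2 first.
    - exact: mulr_gt0.
    - exact: cgp.
    rewrite (lnM (x := C)) ?posrE; last 2 first.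
    - exact: Cpos.
    - exact: sgp.
    by rewrite !ln_powR Hn2.
  have Es : 2 * ln s = ln a + ln b + 2 * ln c.
    have : ln (s ^+ 2) = ln (a * b * c ^+ 2).
      rewrite sE sqr_sqrtr; [by rewrite HG k0E | exact: ltW].
    rewrite (lnXn _ spos) (lnM (x := a * b)) ?posrE; last 2 first.
    - exact: abpos.
    - exact: c2pos.
    rewrite (lnM (x := a)) ?posrE; last 2 first.
    - exact: apos.
    - exact: bpos.
    rewrite (lnXn _ Hc) => H; rewrite !mulr2n in H; lra.
  have E2 : ln b + 2 * ln c <= ln mu + ln gp + ln Q /\
       (strict -> ln b + 2 * ln c < ln mu + ln gp + ln Q).
    have P1 : 0 < b * c ^+ 2 by apply: mulr_gt0.
    have P2 : 0 < mu * gp * Q by apply: mulr_gt0.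
    have -> : ln b + 2 * ln c = ln (b * c ^+ 2).
      rewrite (lnM (x := b)) ?posrE; last 2 first.
      - exact: bpos.
      - exact: c2pos.
      rewrite (lnXn _ Hc) mulr2n; lra.
    have -> : ln mu + ln gp + ln Q = ln (mu * gp * Q).
      rewrite (lnM (x := mu * gp)) ?posrE; last 2 first.
      - exact: mg.
      - exact: Qpos.
      rewrite (lnM (x := mu)) ?posrE; last 2 first.
      - exact: Hmu.
      - exact: gpos.
      by [].
    case: HP' => H1 H2; split; first by rewrite ler_ln ?posrE.
    by move=> st; rewrite ltr_ln ?posrE; [apply: H2 | exact: P1 | exact: P2].
  have CPpos : 0 < C `^ p by apply: powR_gt0.
  have muC : 0 < mu * gp * C `^ p by apply: mulr_gt0.
  have i1 : 0 < (mu * gp * C `^ p)^-1 by rewrite invr_gt0.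
  have i2 : 0 < b `^ ((2 - p * gp) / 2) by exact: powR_gt0.
  have i3 : 0 < a `^ (- a) by exact: powR_gt0.
  have i12 : 0 < (mu * gp * C `^ p)^-1 * b `^ ((2 - p * gp) / 2) by exact: mulr_gt0.
  have Kpos : 0 < K by rewrite KE; apply: mulr_gt0.
  have Dpos : 0 < D by rewrite DE CE -CdE -KE; apply: powR_gt0.
  have lnK : ln K = - (ln mu + ln gp + p * ln C) + (1 - a) * ln b - a * ln a.
    rewrite KE (lnM (x := _ * _)) ?posrE; last 2 first.
    - exact: i12.
    - exact: i3.
    rewrite (lnM (x := _^-1)) ?posrE; last 2 first.
    - exact: i1.
    - exact: i2.
    rewrite lnV ?posrE; last exact: muC.
    rewrite (lnM (x := mu * gp)) ?posrE; last 2 first.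
    - exact: mg.
    - exact: CPpos.
    rewrite (lnM (x := mu)) ?posrE; last 2 first.
    - exact: Hmu.
    - exact: gpos.
    rewrite !ln_powR.
    have -> : (2 - p * gp) / 2 = 1 - a by rewrite aE; field.
    lra.
  have lnD : ln D = (p - 2)^-1 * ln K by rewrite DE CE -CdE -KE ln_powR.
  have E1b : ln Q <= p * (ln C + gp * ln s + (1 - gp) * ln c).
    have pn0 : p != 0 by rewrite gt_eqF.
    by have := ler_wpM2l (ltW p0) E1; rewrite mulrA (mulfV pn0) mul1r.
  have hs : ln s = (ln a + ln b + 2 * ln c) / 2 by rewrite -Es; field.
  rewrite hs in E1b.
  have pg2 : p * gp = 2 * a by rewrite aE; field.
  have t1 : p * gp * ln a = 2 * a * ln a by rewrite pg2.
  have t2 : p * gp * ln b = 2 * a * ln b by rewrite pg2.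
  have t3 : p * gp * ln c = 2 * a * ln c by rewrite pg2.
  case: E2 => E2a E2b.
  case: strict HP HP' E2b => _ _ E2b.
    rewrite -ltr_ln ?posrE; last 2 first.
    - exact: Dpos.
    - exact: Hc.
    rewrite lnD mulrC ltr_pdivrMr; last exact: p2'.
    rewrite lnK.
    have := E2b isT => H; lra.
  rewrite -ler_ln ?posrE; last 2 first.
  - exact: Dpos.
  - exact: Hc.
  rewrite lnD mulrC ler_pdivrMr; last exact: p2'.
  rewrite lnK; lra.
split => H1 H2.
- exact: (key false H1 H2).
- exact: (key true H1 H2).
Qed.
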